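(* Let $d\ge2$ and let $G$ be a DAG or MAG on $\{Y,X_1,\dots,X_d\}$ whose skeleton is the cycle $Y - X_d - X_{d-1} - \cdots - X_1 - Y$, with arbitrary (admissible) edge orientations. Then $N_G=(d^2+d+2)/2$.
   Context: For $A\subseteq\{1,\dots,d\}$, $\mathbf{X}_A:=\{X_i:i\in A\}$. $\perp_G$ is d-separation (m-separation for a MAG). For $S',S''\subseteq\{1,\dots,d\}$, $S'\sim_G S''$ iff there exists $S_\cap\subseteq S'\cap S''$ with $Y\perp_G\mathbf{X}_{(S'\cup S'')\setminus S_\cap}\mid\mathbf{X}_{S_\cap}$ (separation from the empty set holds trivially); this is an equivalence relation, and $N_G$ denotes the number of its equivalence classes on the power set of $\{1,\dots,d\}$. *)

(* Defs.v *)
From mathcomp Require Import all_boot.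
From mathcomp Require Import boolp.
Set Implicit Arguments. Unset Strict Implicit. Unset Printing Implicit Defensive.

(* Mixed graphs (Richardson--Spirtes ancestral-graph setting) on a finite
   vertex type: directed edges u -> v (dir u v), bidirected u <-> v (bi),
   undirected u - v (und). *)
Record mgraph (V : finType) := MGraph {
  dir : rel V; bi : rel V; und : rel V }.

Section MGraph.
Variables (V : finType) (g : mgraph V).

Definition simple_mgraph : Prop :=
  (forall u v, bi g u v = bi g v u) /\ (forall u v, und g u v = und g v u) /\
  (forall u, ~~ dir g u u && ~~ bi g u u && ~~ und g u u) /\
  (forall u v, u != v -> (dir g u v + dir g v u + bi g u v + und g u v <= 1)%N).

Definition adj (u v : V) : bool := [|| dir g u v, dir g v u, bi g u v | und g u v].

Definition arrowhead (u v : V) : bool := dir g u v || bi g u v.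

Definition anc (u v : V) : bool := connect (dir g) u v.

Definition anc_set (Z : {set V}) (v : V) : bool := [exists z in Z, anc v z].

Definition mconnected (x y : V) (Z : {set V}) : Prop :=
  exists p : seq V,
    [/\ path adj x p, uniq (x :: p), last x p = y, x != y &
     forall i, (0 < i < size p)%N ->
       let s := x :: p in
       let a := nth x s i.-1 in let b := nth x s i in let c := nth x s i.+1 in
       if arrowhead a b && arrowhead c b then anc_set Z b else b \notin Z].

Definition msep (A B Z : {set V}) : Prop :=
  forall x y, x \in A -> y \in B -> ~ mconnected x y Z.

Definition is_DAG : Prop :=
  [/\ simple_mgraph, (forall u v, bi g u v = false), (forall u v, und g u v = false) &
      forall u v, dir g u v -> ~~ anc v u].

Definition ancestral : Prop :=
  [/\ forall u v, dir g u v -> ~~ anc v u,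
      forall u v, bi g u v -> ~~ anc u v &
      forall u v, und g u v -> forall w, ~~ dir g w u && ~~ bi g w u].

Definition maximal : Prop :=
  forall u v, u != v -> ~~ adj u v ->
    exists Z : {set V}, [/\ u \notin Z, v \notin Z & msep [set u] [set v] Z].

Definition is_MAG : Prop := [/\ simple_mgraph, ancestral & maximal].

End MGraph.

(* Vertices: 'I_d.+1, with ord0 = Y and i = X_i (1 <= i <= d). *)
Definition cycle_adj (d : nat) (u v : 'I_d.+1) : bool :=
  [|| (u.+1 == v :> nat), (v.+1 == u :> nat),
      ((u == 0 :> nat) && (v == d :> nat)) | ((v == 0 :> nat) && (u == d :> nat))].

(* subsets of {1,...,d}, i.e. sets of X-vertices *)
Definition Xsubsets (d : nat) : {set {set 'I_d.+1}} :=
  [set S : {set 'I_d.+1} | ord0 \notin S].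

Definition simG (d : nat) (g : mgraph 'I_d.+1) (S1 S2 : {set 'I_d.+1}) : Prop :=
  exists Sc : {set 'I_d.+1}, Sc \subset S1 :&: S2 /\
    msep g [set ord0] ((S1 :|: S2) :\: Sc) Sc.

Definition N_G (d : nat) (g : mgraph 'I_d.+1) : nat :=
  #|[set [set T in Xsubsets d | `[< simG g S T >] ] | S in Xsubsets d]|.

(* Main.v *)
Require Import Defs.
From mathcomp Require Import all_boot boolp zify.
Set Implicit Arguments. Unset Strict Implicit. Unset Printing Implicit Defensive.

Definition cadj (d x y : nat) : bool :=
  [|| x.+1 == y, y.+1 == x, (x == 0) && (y == d) | (y == 0) && (x == d)].

Lemma cadjP d x y : cadj d x y ->
  [\/ y = x.+1, x = y.+1, (x = 0 /\ y = d) | (y = 0 /\ x = d)].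
Proof.
rewrite /cadj; case/or4P=> [/eqP<-|/eqP<-|/andP[/eqP -> /eqP ->]|/andP[/eqP -> /eqP ->]].
- by constructor 1.
- by constructor 2.
- by constructor 3.
- by constructor 4.
Qed.

Lemma walk_forced d (f : nat -> nat) (s : seq nat) :
  (forall i w, 0 < i -> w <= d -> cadj d (f i) w ->
     (exists2 j, j < i & w = f j) \/ w = f i.+1) ->
  all (fun x => x <= d) s -> uniq s ->
  (forall i, i.+1 < size s -> cadj d (nth 0 s i) (nth 0 s i.+1)) ->
  nth 0 s 0 = f 0 -> nth 0 s 1 = f 1 ->
  forall i, i < size s -> nth 0 s i = f i.
Proof.
move=> Hf Hall Hu Hadj H0 H1 i.
elim: i {-2}i (leqnn i) => [|n IH] i Hi Hs.
  by have -> : i = 0 by lia.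
have [Hin|Hin] := leqP i n; first exact: IH.
have Ei : i = n.+1 by lia.
subst i.
case: n IH Hi Hin Hs => [|n] IH Hi Hin Hs; first exact: H1.
have Hn : nth 0 s n.+1 = f n.+1 by apply: IH => //; lia.
have Hw : nth 0 s n.+2 <= d.
  by move/allP: Hall; apply; apply: mem_nth.
have := Hadj _ Hs; rewrite Hn => Ha.
case: (Hf _ _ (ltn0Sn n) Hw Ha) => // [[j Hj Hwj]].
have Hj' : nth 0 s j = f j by apply: IH => //; lia.
have Hjs : j < size s by lia.
have := nth_uniq 0 Hs Hjs Hu.
rewrite Hwj -Hj' eqxx => /esym/eqP; lia.
Qed.



Section Cyc.
Variable d : nat.
Hypothesis d2 : 1 < d.
Variable g : mgraph 'I_d.+1.
Hypothesis gs : simple_mgraph g.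
Hypothesis gadj : forall u v, adj g u v = cycle_adj u v.
Local Notation X := 'I_d.+1.

Definition vx (k : nat) : X := inord k.
Definition prevv (v : X) := vx v.-1.
Definition nextv (v : X) := vx (if v == d :> nat then 0 else v.+1).
Definition col (v : X) := arrowhead g (prevv v) v && arrowhead g (nextv v) v.
Definition DZ (Z : {set X}) := [set v : X | (v != ord0) && ((v \in Z) != col v)].
Definition lo (D : {set X}) (x : X) := [exists u in D, (u < x)%N].
Definition hi (D : {set X}) (x : X) := [exists u in D, (x < u)%N].
Definition hull (D : {set X}) (x : X) := lo D x && hi D x.

Lemma vxK k : k <= d -> (vx k : nat) = k.
Proof. by move=> h; rewrite /vx inordK. Qed.

Lemma vx0 : vx 0 = ord0.
Proof. by apply: ord_inj; rewrite vxK. Qed.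

Lemma vx_val (v : X) : vx v = v.
Proof. by apply: ord_inj; rewrite vxK // -ltnS. Qed.

Lemma nbr (v w : X) : v != ord0 -> cycle_adj v w -> w = prevv v \/ w = nextv v.
Proof.
move=> Hv Ha; have Hw := ltn_ord w; have Hv' := ltn_ord v.
have Hv0 : (v : nat) != 0 by [].
case: (cadjP Ha) => [E|E|[E1 E2]|[E1 E2]].
- right; apply: ord_inj; rewrite /nextv.
  have -> : (v == d :> nat) = false by apply/eqP; lia.
  rewrite vxK; lia.
- left; apply: ord_inj; rewrite /prevv vxK; lia.
- by rewrite E1 in Hv0.
- right; apply: ord_inj; rewrite /nextv E2 eqxx vxK //; lia.
Qed.

Lemma dir_irr v : dir g v v = false.
Proof. by case: gs => _ [_ [H _]]; move: (H v); case: (dir g v v). Qed.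
Lemma bi_irr v : bi g v v = false.
Proof. by case: gs => _ [_ [H _]]; move: (H v); case: (bi g v v); rewrite ?andbF. Qed.

Lemma col0 : col ord0 = false.
Proof. by rewrite /col /prevv /= vx0 /arrowhead dir_irr bi_irr. Qed.

Lemma col_noout v w : col v -> dir g v w = false.
Proof.
move=> Hc; apply/negbTE/negP => Hd.
have Hvw : v != w by apply/eqP => E; rewrite E dir_irr in Hd.
have : adj g v w by rewrite /adj Hd.
rewrite gadj => Ha.
have Hv0 : v != ord0 by apply/eqP => E; rewrite E col0 in Hc.
case: gs => _ [_ [_ Hs]].
have Hwv : w != v by rewrite eq_sym.
have Hh : arrowhead g w v.
  by case: (nbr Hv0 Ha) => ->; move: Hc; rewrite /col => /andP[].
move: (Hs w v Hwv) Hh; rewrite /arrowhead Hd.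
by case: (dir g w v); case: (bi g w v).
Qed.

Lemma col_anc v z : col v -> anc g v z -> z = v.
Proof.
move=> Hc /connectP [[|w p] /=]; first by move=> _ ->.
by case/andP; rewrite col_noout.
Qed.

Lemma inner_notD Z (a b c : X) :
  arrowhead g a b && arrowhead g c b = col b ->
  (if arrowhead g a b && arrowhead g c b then anc_set g Z b else b \notin Z) ->
  b \notin DZ Z.
Proof.
move=> ->; rewrite /DZ inE.
case Hc: (col b).
  case/existsP=> z /andP[Hz /(col_anc Hc) E]; subst z.
  by rewrite Hz andbF.
by move=> /negbTE ->; rewrite andbF.
Qed.

Lemma inner_build Z (a b c : X) :
  arrowhead g a b && arrowhead g c b = col b -> b != ord0 ->
  b \notin DZ Z ->
  (if arrowhead g a b && arrowhead g c b then anc_set g Z b else b \notin Z).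
Proof.
move=> -> Hb; rewrite /DZ inE Hb /= negbK.
case Hc: (col b) => /eqP Hz; last by rewrite Hz.
by apply/existsP; exists b; rewrite Hz /anc connect0.
Qed.

Lemma nbr_col (a b c : X) :
  (a = prevv b /\ c = nextv b) \/ (a = nextv b /\ c = prevv b) ->
  arrowhead g a b && arrowhead g c b = col b.
Proof. by case=> -[-> ->] //; rewrite /col andbC. Qed.


Lemma cycle_adjE (u v : X) : cycle_adj u v = cadj d u v.
Proof. by []. Qed.

Definition nbcond (f : nat -> nat) i :=
  (vx (f i.-1) = prevv (vx (f i)) /\ vx (f i.+1) = nextv (vx (f i))) \/
  (vx (f i.-1) = nextv (vx (f i)) /\ vx (f i.+1) = prevv (vx (f i))).

Definition walkcond (f : nat -> nat) := forall i w, 0 < i -> w <= d -> cadj d (f i) w ->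
     (exists2 j, j < i & w = f j) \/ w = f i.+1.

Lemma conn_walk (p : seq X) f :
  path (adj g) ord0 p -> uniq (ord0 :: p) ->
  walkcond f -> f 0 = 0 -> f 1 = nth ord0 p 0 -> 0 < size p ->
  forall i, i <= size p -> nth ord0 (ord0 :: p) i = vx (f i).
Proof.
move=> Hp Hu Hw Hf0 Hf1 Hsz.
set s := map (@nat_of_ord d.+1) (ord0 :: p).
have Hs : size s = (size p).+1 by rewrite size_map.
have Hns : forall i, i <= size p -> nth 0 s i = nth ord0 (ord0 :: p) i.
  by move=> i Hi; rewrite (nth_map ord0) //=; lia.
have W := @walk_forced d f s Hw.
move=> i Hi.
have Wi : nth 0 s i = f i.
  apply: W; last by rewrite Hs.
  - by apply/allP => x /mapP [y _ ->]; rewrite -ltnS.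
  - by rewrite map_inj_uniq //; exact: ord_inj.
  - move=> j Hj; rewrite !Hns; try lia.
    move/(pathP ord0): Hp => /(_ j ltac:(lia)).
    by rewrite gadj cycle_adjE.
  - by rewrite Hns.
  - by rewrite Hns //= Hf1.
have Hfi : f i <= d by rewrite -Wi Hns // -ltnS; exact: ltn_ord.
by apply: ord_inj; rewrite -Hns // Wi vxK.
Qed.

Lemma size_bound (p : seq X) : uniq (ord0 :: p) -> size p <= d.
Proof.
move=> Hu; move: (max_card (mem (ord0 :: p))).
by rewrite (card_uniqP Hu) card_ord.
Qed.

Lemma conn_inner (p : seq X) f Z :
  (forall i, i <= size p -> nth ord0 (ord0 :: p) i = vx (f i)) ->
  (forall i, 0 < i < size p -> nbcond f i) ->
  (forall i, (0 < i < size p)%N ->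
       let s := ord0 :: p in
       let a := nth ord0 s i.-1 in let b := nth ord0 s i in let c := nth ord0 s i.+1 in
       if arrowhead g a b && arrowhead g c b then anc_set g Z b else b \notin Z) ->
  forall i, 0 < i < size p -> vx (f i) \notin DZ Z.
Proof.
move=> Hn Hnb Hc i Hi.
move: (Hc i Hi); rewrite /= -[nth ord0 p i]/(nth ord0 (ord0 :: p) i.+1) !Hn; try lia.
apply: inner_notD; apply: nbr_col; exact: Hnb.
Qed.

Definition fdown i := if i == 0 then 0 else d.+1 - i.

Lemma walk_up : walkcond id.
Proof.
move=> i w Hi Hw /cadjP [E|E|[E1 E2]|[E1 E2]].
- by right.
- by left; exists w => //; lia.
- lia.
- by left; exists 0.
Qed.

Lemma walk_down : walkcond fdown.
Proof.
rewrite /fdown => i w Hi Hw.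
have -> : (i == 0) = false by apply/eqP; lia.
case/cadjP => [E|E|[E1 E2]|[E1 E2]].
- left; case: (leqP i d) => Hid.
  + exists i.-1; first lia.
    have -> : (i.-1 == 0) = false by apply/eqP; lia.
    lia.
  + exists d; first lia.
    have -> : (d == 0) = false by apply/eqP; lia.
    lia.
- by right; rewrite /=; lia.
- left; exists 1; first lia. simpl. lia.
- by left; exists 0.
Qed.

Lemma conn_nhull (a : X) Z : a != ord0 -> mconnected g ord0 a Z -> ~~ hull (DZ Z) a.
Proof.
move=> Ha [p [Hp Hu Hl Hne Hc]].
have Hsz : 0 < size p by case: p Hp Hu Hl Hne Hc => //= _ _ ->; rewrite eqxx.
have Hsb := size_bound Hu.
have Hlast : a = nth ord0 (ord0 :: p) (size p).
  by rewrite -Hl -[last _ p]/(last ord0 (ord0 :: p)) -nth_last.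
have H01 : cadj d 0 (nth ord0 p 0).
  by move/(pathP ord0): Hp => /(_ 0 Hsz); rewrite gadj cycle_adjE.
have Hnd := ltn_ord (nth ord0 p 0).
case/cadjP: H01 => [E|E|[_ E]|[E1 E2]]; last lia; first 2 last.
-
  have Hn := conn_walk Hp Hu walk_down erefl (_ : fdown 1 = _) Hsz.
  have Hn' : forall i, i <= size p -> nth ord0 (ord0 :: p) i = vx (fdown i).
    by apply: Hn; rewrite /fdown /= E; lia.
  have Ea : (a : nat) = d.+1 - size p.
    rewrite Hlast Hn' // vxK /fdown; case: eqP; lia.
  have Hin := conn_inner Hn' _ Hc.
  rewrite /hull negb_and; apply/orP; right; apply/existsP => -[u /andP[Hu1 Hu2]].
  have Hud := ltn_ord u.
  have : vx (fdown (d.+1 - u)) \notin DZ Z.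
    apply: Hin; [|apply/andP; split]; last first.
    { move: Hud Hu2 Ea Hsb. clear -d. rewrite /=. set n := size _. lia. }
    { move: Hud. clear -d. move=> Hud. lia. }
    move=> i Hi; rewrite /nbcond /fdown /prevv /nextv.
    have -> : (i == 0) = false by apply/eqP; lia.
    have -> : (i.+1 == 0) = false by [].
    rewrite vxK; last lia.
    case: (i =P 1) => Ei.
    + subst i; right; rewrite /=.
      have -> : (d.+1 - 1 == d) = true by apply/eqP; lia.
      split; congr vx; lia.
    + right; have -> : (i.-1 == 0) = false by apply/eqP; lia.
      have -> : (d.+1 - i == d) = false by apply/eqP; lia.
      split; congr vx; lia.
  rewrite /fdown; have -> : (d.+1 - u == 0) = false by apply/eqP; lia.
  have -> : d.+1 - (d.+1 - u) = u by lia.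
  by rewrite vx_val Hu1.
-
  have Hn := conn_walk Hp Hu walk_up erefl (_ : id 1 = _) Hsz.
  have Hn' : forall i, i <= size p -> nth ord0 (ord0 :: p) i = vx i.
    by apply: Hn; rewrite E.
  have Ea : (a : nat) = size p by rewrite Hlast Hn' // vxK.
  have Hin := @conn_inner p id Z Hn' _ Hc.
  rewrite /hull negb_and; apply/orP; left; apply/existsP => -[u /andP[Hu1 Hu2]].
  have Hu0 : (u : nat) != 0.
    by apply: contraTneq Hu1 => E0; rewrite inE (_ : u = ord0) //; apply: ord_inj.
  have : vx u \notin DZ Z.
    apply: Hin; last first.
      move: Hu0 Hu2 Ea; clear -d; rewrite /=; set n := size _; lia.
    move=> i Hi; left; rewrite /prevv /nextv vxK; last lia.
    have -> : (i == d) = false by apply/eqP; lia.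
    by [].
  by rewrite vx_val Hu1.
- lia.
Qed.

Lemma build f n Z :
  0 < n -> f 0 = 0 -> (forall i, i <= n -> f i <= d) ->
  (forall i j, i <= n -> j <= n -> f i = f j -> i = j) ->
  (forall i, i < n -> cadj d (f i) (f i.+1)) ->
  (forall i, 0 < i <= n -> f i != 0) ->
  (forall i, 0 < i < n -> nbcond f i) ->
  (forall i, 0 < i < n -> vx (f i) \notin DZ Z) ->
  mconnected g ord0 (vx (f n)) Z.
Proof.
move=> Hn0 Hf0 Hfd Hinj Hadj Hnz Hnb HD.
pose p := [seq vx (f k) | k <- iota 1 n].
have Hsz : size p = n by rewrite size_map size_iota.
have E : ord0 :: p = [seq vx (f k) | k <- iota 0 n.+1] by rewrite /= Hf0 vx0.
have Hn : forall i, i <= n -> nth ord0 (ord0 :: p) i = vx (f i).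
  by move=> i Hi; rewrite E (nth_map 0) ?size_iota ?nth_iota.
exists p; split.
- apply/(pathP ord0) => i; rewrite Hsz => Hi.
  rewrite -[nth ord0 p i]/(nth ord0 (ord0 :: p) i.+1) !Hn; try lia.
  by rewrite gadj cycle_adjE !vxK ?Hfd ?Hadj //; lia.
- rewrite E map_inj_in_uniq ?iota_uniq // => x y; rewrite !mem_iota => Hx Hy.
  move/(congr1 (@nat_of_ord _)); rewrite !vxK ?Hfd; try lia.
  by apply: Hinj; lia.
- by rewrite -[last _ p]/(last ord0 (ord0 :: p)) -nth_last /= Hsz Hn.
- apply/eqP => /(congr1 (@nat_of_ord _)); rewrite vxK ?Hfd // => E0.
  by move: (Hnz n); rewrite -E0 eqxx; move/(_ ltac:(lia)).
- move=> i; rewrite Hsz => Hi /=.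
  rewrite -[nth ord0 p i]/(nth ord0 (ord0 :: p) i.+1) !Hn; try lia.
  apply: inner_build; first by apply: nbr_col; exact: Hnb.
    apply/eqP => /(congr1 (@nat_of_ord _)); rewrite vxK ?Hfd /=; try lia.
    by move=> E0; move: (Hnz i); rewrite E0 eqxx; move/(_ ltac:(lia)).
  exact: HD.
Qed.

Lemma nhull_conn (a : X) Z : a != ord0 -> ~~ hull (DZ Z) a -> mconnected g ord0 a Z.
Proof.
move=> Ha; have Ha0 : (a : nat) != 0 by [].
have Had := ltn_ord a.
rewrite /hull negb_and => /orP [Hlo|Hhi].
- rewrite -(vx_val a); apply: (@build id a).
  + lia.
  + done.
  + move=> i Hi /=; lia.
  + by move=> i j _ _ ->.
  + by move=> i Hi; rewrite /cadj /= eqxx.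
  + by move=> i Hi; apply/eqP; lia.
  + move=> i Hi; left; rewrite /prevv /nextv vxK; last lia.
    by have -> : (i == d) = false by apply/eqP; lia.
  + move=> i Hi; apply: contra Hlo => HiD; apply/existsP; exists (vx i).
    by rewrite HiD vxK //; lia.
- have -> : a = vx (fdown (d.+1 - a)).
    rewrite /fdown; have -> : (d.+1 - a == 0) = false by apply/eqP; lia.
    by apply: ord_inj; rewrite vxK; lia.
  apply: build.
  + lia.
  + done.
  + by move=> i Hi; rewrite /fdown; case: eqP; lia.
  + move=> i j Hi Hj; rewrite /fdown; case: eqP; case: eqP; lia.
  + move=> i Hi; rewrite /fdown /cadj /=; case: (i =P 0) => Ei.
    * subst i; rewrite /=; apply/orP; right; apply/orP; left; apply/eqP; lia.
    * apply/or4P; constructor 2; apply/eqP; lia.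
  + move=> i Hi; rewrite /fdown; case: (i =P 0) => Ei; apply/eqP; lia.
  + move=> i Hi; rewrite /nbcond /fdown /prevv /nextv.
    have -> : (i == 0) = false by apply/eqP; lia.
    have -> : (i.+1 == 0) = false by [].
    rewrite vxK; last lia.
    case: (i =P 1) => Ei.
    * subst i; right; rewrite /=.
      have -> : (d.+1 - 1 == d) = true by apply/eqP; lia.
      split; congr vx; lia.
    * right; have -> : (i.-1 == 0) = false by apply/eqP; lia.
      have -> : (d.+1 - i == d) = false by apply/eqP; lia.
      split; congr vx; lia.
  + move=> i Hi; apply: contra Hhi => HiD; apply/existsP; exists (vx (fdown i)).
    rewrite HiD vxK /fdown; have -> : (i == 0) = false by apply/eqP; lia.
    all: lia.
Qed.

Lemma mconn_iff (a : X) Z : a != ord0 -> mconnected g ord0 a Z <-> ~~ hull (DZ Z) a.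
Proof. by move=> Ha; split; [exact: conn_nhull | exact: nhull_conn]. Qed.

Definition rr (S : {set X}) := [set x in S | ~~ hull (DZ S) x].

Lemma lo_eq (D1 D2 : {set X}) : (forall x, (x \in D1) != (x \in D2) -> hull D1 x) -> lo D1 =1 lo D2.
Proof.
move=> H x; apply/idP/idP.
- case/existsP => u /andP [Hu Hux].
  suff K : forall n (u : X), (u <= n)%N -> u \in D1 -> (u < x)%N -> lo D2 x.
    exact: (K u u (leqnn _) Hu Hux).
  elim=> [|n IH] v Hvn Hv Hvx; (case Hv2: (v \in D2); first by apply/existsP; exists v; rewrite Hv2);
    (have : hull D1 v by apply: H; rewrite Hv Hv2);
    case/andP => /existsP [w /andP [Hw Hwv]] _.
  + lia.
  + by apply: (IH w) => //; lia.
- case/existsP => u /andP [Hu Hux].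
  case Hu1: (u \in D1); first by apply/existsP; exists u; rewrite Hu1.
  have : hull D1 u by apply: H; rewrite Hu Hu1.
  case/andP => /existsP [w /andP [Hw Hwv]] _.
  by apply/existsP; exists w; rewrite Hw; lia.
Qed.

Lemma hi_eq (D1 D2 : {set X}) : (forall x, (x \in D1) != (x \in D2) -> hull D1 x) -> hi D1 =1 hi D2.
Proof.
move=> H x; apply/idP/idP.
- case/existsP => u /andP [Hu Hux].
  suff K : forall n (u : X), (d - u <= n)%N -> u \in D1 -> (x < u)%N -> hi D2 x.
    exact: (K _ u (leqnn _) Hu Hux).
  elim=> [|n IH] v Hvn Hv Hvx; (case Hv2: (v \in D2); first by apply/existsP; exists v; rewrite Hv2);
    (have : hull D1 v by apply: H; rewrite Hv Hv2);
    case/andP => _ /existsP [w /andP [Hw Hwv]]; have := ltn_ord w; have := ltn_ord v.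
  + lia.
  + by move=> *; apply: (IH w) => //; lia.
- case/existsP => u /andP [Hu Hux].
  case Hu1: (u \in D1); first by apply/existsP; exists u; rewrite Hu1.
  have : hull D1 u by apply: H; rewrite Hu Hu1.
  case/andP => _ /existsP [w /andP [Hw Hwv]].
  by apply/existsP; exists w; rewrite Hw; lia.
Qed.

Lemma hull_eq (D1 D2 : {set X}) : (forall x, (x \in D1) != (x \in D2) -> hull D1 x) -> hull D1 =1 hull D2.
Proof. by move=> H x; rewrite /hull (lo_eq H) (hi_eq H). Qed.

Lemma DZ_diff (S T : {set X}) (x : X) : (x \in DZ S) != (x \in DZ T) -> (x \in S) != (x \in T).
Proof. by rewrite !inE; case: (x \in S); case: (x \in T); case: (x != ord0); case: (col x). Qed.

Lemma rr_sub (S : {set X}) : rr S \subset S.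
Proof. by apply/subsetP => x; rewrite inE => /andP []. Qed.

Lemma hull_rr (S : {set X}) : hull (DZ (rr S)) =1 hull (DZ S).
Proof.
move=> x; symmetry; apply: hull_eq => y /DZ_diff.
by rewrite inE; case: (y \in S) => //=; rewrite negbK.
Qed.

Lemma rr_key (Sc S : {set X}) : Sc \subset S -> (forall a, a \in S -> a \notin Sc -> hull (DZ Sc) a) ->
  rr S = rr Sc.
Proof.
move=> Hsub H.
have E : hull (DZ Sc) =1 hull (DZ S).
  apply: hull_eq => y /DZ_diff.
  case Hy: (y \in Sc); first by rewrite (subsetP Hsub _ Hy).
  by move=> Hy'; apply: H; [move: Hy'; case: (y \in S) | rewrite Hy].
apply/setP => x; rewrite !inE -E.
case Hx: (x \in Sc); first by rewrite (subsetP Hsub _ Hx).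
by case Hx': (x \in S) => //=; rewrite H ?Hx.
Qed.

Lemma msep_iff (A Z : {set X}) : ord0 \notin A ->
  msep g [set ord0] A Z <-> (forall a, a \in A -> hull (DZ Z) a).
Proof.
move=> H0; split.
- move=> H a Ha; apply/negPn/negP => Hn.
  have Ha0 : a != ord0 by apply: contraNneq H0 => <-.
  by apply: (H ord0 a (set11 _) Ha); apply/mconn_iff.
- move=> H x y; rewrite inE => /eqP -> Hy.
  have Hy0 : y != ord0 by apply: contraNneq H0 => <-.
  by move/(mconn_iff _ Hy0); rewrite H.
Qed.

Lemma simG_iff (S T : {set X}) : ord0 \notin S -> ord0 \notin T -> simG g S T <-> rr S = rr T.
Proof.
move=> HS HT; split.
- case=> Sc [Hsub Hm].
  have H0 : ord0 \notin (S :|: T) :\: Sc by rewrite !inE negb_and negb_or HS HT orbT.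
  have Hh := (msep_iff _ H0).1 Hm.
  have [HsS HsT] : Sc \subset S /\ Sc \subset T.
    by split; apply: (subset_trans Hsub); rewrite ?subsetIl ?subsetIr.
  rewrite (rr_key HsS) ?(rr_key HsT) // => a Ha Hna; apply: Hh; by rewrite !inE Ha Hna ?orbT.
- move=> E; exists (rr S); split.
    by rewrite subsetI rr_sub E rr_sub.
  have H0 : ord0 \notin (S :|: T) :\: rr S by rewrite !inE negb_and negb_or HS HT orbT.
  apply/(msep_iff _ H0) => a; rewrite !inE => /andP [Hna /orP [Ha|Ha]].
  + by rewrite hull_rr; move: Hna; rewrite Ha /= negbK.
  + have : a \notin rr T by rewrite -E inE.
    by rewrite E hull_rr; rewrite inE Ha /= negbK.
Qed.

Lemma DZ0 (R : {set X}) : ord0 \notin DZ R.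
Proof. by rewrite inE eqxx. Qed.

Lemma DZK (R : {set X}) : ord0 \notin R -> DZ (DZ R) = R.
Proof.
move=> H; apply/setP => x; rewrite !inE.
case: (x =P ord0) => [->|_] /=; first by rewrite (negbTE H).
by case: (x \in R); case: (col x).
Qed.

Lemma hull_pos (D : {set X}) x : hull D x -> x != ord0.
Proof.
case/andP => /existsP [u /andP [_ Hu]] _; apply/eqP => E; subst x.
by move: Hu; rewrite ltn0.
Qed.

Definition Good := [set R in Xsubsets d | [forall x in R, ~~ hull (DZ R) x]].
Definition Good' := [set D in Xsubsets d | [forall x, hull D x ==> ((x \in D) == col x)]].

Lemma rr_X (S : {set X}) : S \in Xsubsets d -> rr S \in Xsubsets d.
Proof.
by rewrite !inE => H; rewrite (negbTE H).
Qed.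

Lemma rr_img : rr @: Xsubsets d = Good.
Proof.
apply/setP => R; apply/imsetP/idP.
- case=> S HS ->; rewrite inE rr_X //=.
  apply/forall_inP => x; rewrite hull_rr inE => /andP [] //.
- rewrite inE => /andP [HR /forall_inP H]; exists R => //.
  apply/setP => x; rewrite inE; case Hx: (x \in R) => //=.
  by rewrite H.
Qed.

Lemma DZ_img : DZ @: Good = Good'.
Proof.
apply/setP => D; apply/imsetP/idP.
- case=> R; rewrite inE => /andP [HR /forall_inP H] ->.
  rewrite inE; apply/andP; split; first by rewrite inE DZ0.
  apply/forallP => x; apply/implyP => Hh.
  have Hx0 := hull_pos Hh.
  case HxR: (x \in R).
    by move: (H x HxR); rewrite Hh.
  by rewrite inE Hx0 HxR; case: (col x).
- rewrite inE => /andP [HD /forallP H].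
  move: HD; rewrite inE => HD.
  exists (DZ D); last by rewrite DZK.
  rewrite inE; apply/andP; split; first by rewrite inE DZ0.
  apply/forall_inP => x; rewrite DZK //.
  rewrite inE => /andP [_ Hx]; apply/negP => Hh.
  by move: (H x); rewrite Hh /= => /eqP E; rewrite E eqxx in Hx.
Qed.

Lemma card_Good : #|Good| = #|Good'|.
Proof.
rewrite -DZ_img card_in_imset // => R1 R2; rewrite !inE => /andP [H1 _] /andP [H2 _] E.
by rewrite -(DZK H1) E DZK.
Qed.

Lemma NG_Good : N_G g = #|Good|.
Proof.
rewrite /N_G -rr_img.
pose cls (R : {set X}) := [set T in Xsubsets d | rr T == R].
have E : [set [set T in Xsubsets d | `[< simG g S T >] ] | S in Xsubsets d] =
         [set (cls \o rr) S | S in Xsubsets d].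
  apply: eq_in_imset => S HS; apply/setP => T /=; rewrite !inE.
  case HT: (ord0 \notin T) => //=.
  move: HS; rewrite inE => HS.
  apply/asboolP/eqP; rewrite simG_iff //; by move=> ->.
rewrite E (imset_comp cls rr) (card_in_imset (f := cls)) // => x y /imsetP [S HS ->] /imsetP [S' HS' ->] Ec.
have : S \in cls (rr S) by rewrite inE HS eqxx.
by rewrite Ec inE => /andP [_ /eqP].
Qed.

Definition pairs := [set p : X * X | (0 < p.2) && (p.2 <= p.1)].
Definition psi (p : X * X) :=
  [set x : X | [|| x == p.2, x == p.1 | (p.2 < x < p.1) && col x]].

Lemma psi_range p (x : X) : p \in pairs -> x \in psi p -> (p.2 <= x <= p.1).
Proof.
case: p => a b; rewrite !inE /= => /andP [H1 H2] /or3P [/eqP ->|/eqP ->|/andP [/andP [A B] _]].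
- by rewrite leqnn H2.
- by rewrite leqnn H2.
- by apply/andP; split; apply: ltnW.
Qed.

Lemma psi_good p : p \in pairs -> psi p \in Good'.
Proof.
move=> Hp; rewrite inE; apply/andP; split.
  rewrite [_ \in Xsubsets d]inE; apply/negP => /(psi_range Hp).
  by move: Hp; case: p => a b; rewrite inE /= => /andP [H1 _]; rewrite leqNgt H1.
apply/forallP => x; apply/implyP => /andP [/existsP [u /andP [Hu Hux]] /existsP [v /andP [Hv Hxv]]].
have := psi_range Hp Hu; have := psi_range Hp Hv.
case: p {Hp Hu Hv} => a b /= R1 R2.
rewrite inE /=.
have -> : (x == b) = false by apply/eqP => E; subst x; lia.
have -> : (x == a) = false by apply/eqP => E; subst x; lia.
have -> : (b < x < a) = true by lia.
by [].
Qed.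

Lemma psi_inj : {in pairs &, injective psi}.
Proof.
move=> p q Hp Hq E.
have R1 : p.2 <= q.2 <= p.1 by apply: (psi_range Hp); rewrite E inE eqxx.
have R2 : p.2 <= q.1 <= p.1 by apply: (psi_range Hp); rewrite E inE eqxx orbT.
have R3 : q.2 <= p.2 <= q.1 by apply: (psi_range Hq); rewrite -E inE eqxx.
have R4 : q.2 <= p.1 <= q.1 by apply: (psi_range Hq); rewrite -E inE eqxx orbT.
move: R1 R2 R3 R4; case: p {Hp E} => a b; case: q {Hq} => a' b' /= R1 R2 R3 R4.
have -> : a = a' by apply: ord_inj; lia.
have -> : b = b' by apply: ord_inj; lia.
by [].
Qed.

Lemma good_psi (D : {set X}) : D \in Good' -> D != set0 -> D \in psi @: pairs.
Proof.
rewrite inE => /andP [HX /forallP H] /set0Pn [x0 Hx0].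
move: HX; rewrite inE => HX.
have [m Hm Hmin] := @arg_minnP _ x0 (fun i => i \in D) (fun i : X => nat_of_ord i) Hx0.
have [M HM Hmax] := @arg_maxnP _ x0 (fun i => i \in D) (fun i : X => nat_of_ord i) Hx0.
have Hm0 : 0 < m.
  rewrite lt0n; apply/negP => /eqP E.
  have : m = ord0 by apply: ord_inj.
  by move=> Em; rewrite -Em Hm in HX.
have HmM : m <= M by exact: Hmax.
have Hhull : forall x : X, m < x < M -> hull D x.
  move=> x /andP [A B]; apply/andP; split; apply/existsP; [exists m | exists M];
  by apply/andP; split.
apply/imsetP; exists (M, m); first by rewrite inE /= Hm0 HmM.
apply/setP => x; rewrite inE /=.
case Hx: (x \in D).
- have A : m <= x by exact: Hmin.
  have B : x <= M by exact: Hmax.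
  case: (x =P m) => //= Exm; case: (x =P M) => //= ExM.
  have C : m < x < M.
    apply/andP; split; rewrite ltn_neqAle ?A ?B andbT;
      apply/eqP => E; [apply: Exm | apply: ExM]; apply: ord_inj => //.
  rewrite C /=; move: (H x); rewrite Hhull //= Hx eq_sym => /eqP <-.
  by [].
- have -> : (x == m) = false by apply/eqP => E; rewrite E Hm in Hx.
  have -> : (x == M) = false by apply/eqP => E; rewrite E HM in Hx.
  case C: (m < x < M) => //=.
  by move: (H x); rewrite Hhull // Hx /= eq_sym => /eqP <-.
Qed.

Lemma set0_good : set0 \in Good'.
Proof.
rewrite inE; apply/andP; split; first by rewrite inE inE.
apply/forallP => x; apply/implyP => /andP [/existsP [u /andP [Hu _]] _].
by rewrite inE in Hu.
Qed.

Lemma Good'_eq : Good' = set0 |: psi @: pairs.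
Proof.
apply/setP => D; rewrite in_setU1; apply/idP/idP.
- move=> HD; case: (D =P set0) => [-> //|/eqP HD0].
  by rewrite good_psi ?orbT.
- case/orP => [/eqP ->|/imsetP [p Hp ->]]; first exact: set0_good.
  exact: psi_good.
Qed.

Lemma card_Good' : #|Good'| = #|pairs|.+1.
Proof.
rewrite Good'_eq cardsU1 card_in_imset; last exact: psi_inj.
suff -> : set0 \notin psi @: pairs by [].
apply/imsetP => -[p Hp E].
have : p.2 \in psi p by rewrite inE eqxx.
by rewrite -E inE.
Qed.

Lemma aux_sum n k : \sum_(j < n | (0 < j) && (j <= k)) 1 = minn k n.-1.
Proof.
elim: n => [|n IH]; first by rewrite big_ord0 minn0.
rewrite big_mkcond big_ord_recr /= -big_mkcond IH.
case: ifP => /= H; lia.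
Qed.

Lemma sumi n : (\sum_(i < n) (i : nat)) * 2 = n * n.-1.
Proof.
elim: n => [|n IH]; first by rewrite big_ord0.
rewrite big_ord_recr /= mulnDl IH; case: n {IH} => [|n] //=; nia.
Qed.

Lemma card_pairs : #|pairs| * 2 = d.+1 * d.
Proof.
rewrite /pairs cardsE -sum1_card.
rewrite (eq_bigl (fun p : X * X => xpredT p.1 && ((0 < p.2) && (p.2 <= p.1)))); last first.
  by move=> p.
rewrite -(@pair_big_dep nat 0 addn X X xpredT (fun i j : X => (0 < j) && (j <= i)) (fun _ _ => 1)) /=.
rewrite (eq_bigr (fun i : X => (i : nat))); first by rewrite sumi.
move=> i _; rewrite aux_sum /=; have := ltn_ord i; lia.
Qed.

End Cyc.

Theorem mainTheorem10 (d : nat) (g : mgraph 'I_d.+1) :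
  (2 <= d)%N ->
  (is_DAG g \/ is_MAG g) ->
  (forall u v, adj g u v = cycle_adj u v) ->
  (N_G g * 2 = d ^ 2 + d + 2)%N.
Proof.
move=> d2 Hg gadj.
have gs : simple_mgraph g by case: Hg => -[].
rewrite (NG_Good d2 gs gadj) card_Good card_Good' //.
have := @card_pairs d d2; rewrite -mulnn; lia.
Qed.
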